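(* Let $\nu$ be a bounded continuous valuation on Johnstone's dcpo $\mathcal J$ (Scott topology). For each Scott-open $U\subseteq\mathcal J$ let $\nu^*(U)=\nu(U)-\sum_{a\in N}\nu_{\{a\}}(U)$. Then $\nu^*$ is a bounded continuous valuation on $\mathcal J$.
   Context: Johnstone's dcpo: $\mathcal J=\mathbb N\times(\mathbb N\cup\{\infty\})$ ordered by $(a,b)\le(c,d)$ iff either ($a=c$ and $b\le d$) or ($d=\infty$ and $b\le c$). $N=\mathcal J\setminus\{(i,\infty):i\in\mathbb N\}$ is the set of non-maximal elements. For $n\in\mathbb N$ let $L_n=\{(j,n):j\in\mathbb N\}$. For $a=(j,n)\in N$, the sets $U_a=\{a\}\cup{\uparrow}L_{n+1}$ and $V_a={\uparrow}L_{n+1}$ are Scott-open with $V_a\subseteq U_a$ and $U_a\setminus V_a=\{a\}$, and $\nu_{\{a\}}$ is the continuous valuation $W\mapsto\nu(W\cap U_a)-\nu(W\cap V_a)$. A valuation is a strict, monotone, modular map $\mathcal OX\to[0,\infty]$; continuous if it preserves directed suprema of opens; bounded if $\nu(X)<\infty$. *)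

(* Defs.v *)
From HB Require Import structures.
From mathcomp Require Import all_boot all_order all_algebra.
From mathcomp Require Import all_classical all_reals.
From mathcomp Require Import ereal esum.
Set Implicit Arguments. Unset Strict Implicit. Unset Printing Implicit Defensive.
Import Order.TTheory GRing.Theory Num.Theory.
Local Open Scope classical_set_scope.
Local Open Scope ereal_scope.

(* Johnstone's dcpo: N x (N u {oo}); [None] encodes oo. *)
Definition J : Type := (nat * option nat)%type.

Definition leo (b d : option nat) : Prop :=
  match b, d with
  | _, None => True
  | None, Some _ => False
  | Some m, Some n => (m <= n)%N
  end.

Definition Jle (x y : J) : Prop :=
  (x.1 = y.1 /\ leo x.2 y.2) \/ (y.2 = None /\ leo x.2 (Some y.1)).

Definition upper_set (U : set J) : Prop :=
  forall x y, U x -> Jle x y -> U y.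
Definition directed (D : set J) : Prop :=
  (exists d, D d) /\
  forall x y, D x -> D y -> exists z, D z /\ Jle x z /\ Jle y z.
Definition is_sup (D : set J) (s : J) : Prop :=
  (forall d, D d -> Jle d s) /\ (forall u, (forall d, D d -> Jle d u) -> Jle s u).
Definition scott_open (U : set J) : Prop :=
  upper_set U /\
  forall D s, directed D -> is_sup D s -> U s -> exists d, D d /\ U d.

Definition Nset : set J := [set a | a.2 <> None].
Definition Lset (n : nat) : set J := [set x | x.2 = Some n].
Definition up (A : set J) : set J := [set y | exists x, A x /\ Jle x y].

(* U_a = {a} u up L_(n+1), V_a = up L_(n+1), for a = (j,n) in N
   (arbitrary value set0 for a maximal, never used) *)
Definition Ua (a : J) : set J :=
  match a.2 with Some n => [set a] `|` up (Lset n.+1) | None => set0 end.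
Definition Va (a : J) : set J :=
  match a.2 with Some n => up (Lset n.+1) | None => set0 end.

Section Valuations.
Variable R : realType.

Definition valuation (nu : set J -> \bar R) : Prop :=
  [/\ nu set0 = 0,
      (forall U, scott_open U -> 0 <= nu U),
      (forall U V, scott_open U -> scott_open V -> U `<=` V -> nu U <= nu V) &
      (forall U V, scott_open U -> scott_open V ->
         nu U + nu V = nu (U `|` V) + nu (U `&` V))].

Definition directed_family (F : set (set J)) : Prop :=
  (exists U, F U) /\
  forall U V, F U -> F V -> exists W, F W /\ U `<=` W /\ V `<=` W.

Definition continuous_valuation (nu : set J -> \bar R) : Prop :=
  valuation nu /\
  forall F : set (set J), (forall U, F U -> scott_open U) -> directed_family F ->
    nu (\bigcup_(U in F) U) = ereal_sup (nu @` F).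

Definition bounded_valuation (nu : set J -> \bar R) : Prop :=
  valuation nu /\ nu setT < +oo.

Definition nu_pt (nu : set J -> \bar R) (a : J) (W : set J) : \bar R :=
  nu (W `&` Ua a) - nu (W `&` Va a).

Definition nu_star (nu : set J -> \bar R) (U : set J) : \bar R :=
  nu U - esum Nset (fun a => nu_pt nu a U).

End Valuations.

(* Main.v *)
Require Import Defs.
From mathcomp Require Import all_boot all_order all_algebra.
From mathcomp Require Import all_classical all_reals.
From mathcomp Require Import ereal esum.
From mathcomp Require Import lra.
Set Implicit Arguments. Unset Strict Implicit. Unset Printing Implicit Defensive.
Import Order.TTheory GRing.Theory Num.Theory.
Local Open Scope classical_set_scope.

Lemma leo_refl b : leo b b.
Proof. by case: b => //= n. Qed.

Lemma leo_trans a b c : leo a b -> leo b c -> leo a c.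
Proof.
case: a => [a|]; case: b => [b|]; case: c => [c|] //=.
exact: leq_trans.
Qed.

Lemma Jle_refl x : Jle x x.
Proof. by left; split => //; apply: leo_refl. Qed.

Lemma Jle_trans x y z : Jle x y -> Jle y z -> Jle x z.
Proof.
case: x => x1 x2; case: y => y1 y2; case: z => z1 z2; rewrite /Jle /=.
move=> [[<- h1]|[e1 h1]] [[<- h2]|[e2 h2]].
- by left; split => //; apply: leo_trans h1 h2.
- by right; split => //; apply: leo_trans h1 h2.
- by subst y2; case: z2 h2 => // _; right.
- by subst y2.
Qed.

Lemma Jle_below_nonmax x j m : Jle x (j, Some m) ->
  x.1 = j /\ exists k, x.2 = Some k /\ (k <= m)%N.
Proof.
case: x => x1 [k|]; rewrite /Jle /=.
- by move=> [[-> h]|[]//]; split => //; exists k.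
- by move=> [[-> []]|[]//].
Qed.

Lemma Jle_max x c : Jle x (c, None) <-> (x.1 = c \/ exists k, x.2 = Some k /\ (k <= c)%N).
Proof.
case: x => x1 [k|]; rewrite /Jle /=; split.
- by move=> [[-> _]|[_ h]]; [left|right; exists k].
- by move=> [->|[k' [[<-] h]]]; [left|right].
- by move=> [[-> _]|[_ []]]; left.
- by move=> [->|[k' []]]; left.
Qed.

Definition hi (k : nat) (x : J) : Prop :=
  match x.2 with Some l => (k <= l)%N | None => True end.

Lemma upL k : up (Lset k) = hi k.
Proof.
apply/seteqP; split => [y [x [Lx xy]]|y hy].
- move: xy; rewrite /hi; case: y => y1 [l|] //=.
  by rewrite /Jle /= Lx /= => -[[_ //]|[//]].
- exists (y.1, Some k); split => //; left; split => //.
Qed.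

Definition lv (x : J) : nat := odflt 0%N x.2.

Lemma open_char U : scott_open U <->
  upper_set U /\ (forall c, U (c, None) -> exists n, U (c, Some n)).
Proof.
split.
- move=> [up sc]; split => // c Uc.
  have [||d [[d1 d2] Ud]] := sc [set x | x.1 = c /\ x.2 <> None] (c, None) _ _ Uc.
  + split; first by exists (c, Some 0%N).
    move=> [a b] [a' b'] /= [-> hb] [-> hb'].
    case: b hb => [b _|//]; case: b' hb' => [b' _|//].
    exists (c, Some (maxn b b')); split => //; split; left; split => //=.
    * by rewrite leq_maxl.
    * by rewrite leq_maxr.
  + split; first by case=> a b [/= -> _]; left; split => //; case: b.
    move=> u hu; case: u hu => u1 [m|] hu.
    * have := hu (c, Some m.+1) (conj erefl (fun e : Some _ = None => ltac:(discriminate e))).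
      by rewrite /Jle /= => -[[_ /=]|[]//]; rewrite ltnn.
    * have := hu (c, Some u1.+1) (conj erefl (fun e : Some _ = None => ltac:(discriminate e))).
      rewrite /Jle /= => -[[<- _]|[_]]; last by rewrite ltnn.
      by left.
  + by case: d d1 d2 Ud => a [b|] //= -> _ Ud; exists b.
- move=> [up mx]; split => // D s [[d0 Dd0] dir] [sub lub] Us.
  apply: contrapT => nD.
  have nU : forall d, D d -> ~ U d by move=> d Dd Ud; apply: nD; exists d.
  case: s sub lub Us => s1 [m|] sub lub Us.
  +
    have hD : forall d, D d -> d.1 = s1 /\ exists k, d.2 = Some k /\ (k < m)%N.
      move=> d Dd; have [e [k [ek km]]] := Jle_below_nonmax (sub _ Dd).
      split => //; exists k; split => //; rewrite ltn_neqAle km andbT.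
      apply/negP => /eqP km'; apply: (nU d Dd); subst k.
      by case: d Dd ek e => a b /= Dd -> ->.
    have [_ [k [_ km]]] := hD _ Dd0.
    have : Jle (s1, Some m) (s1, Some m.-1).
      apply: lub => -[d1 d2] Dd; have [/= <- [k' [/= -> km']]] := hD _ Dd; left; split => //=.
      by rewrite -ltnS prednK // (leq_trans _ km').
    rewrite /Jle /= => -[[_]|[]//]; rewrite leqNgt => /negP; apply.
    by rewrite prednK // (leq_trans _ km).
  + have [n Un] := mx _ Us.
    have nm : forall d, D d -> d.2 <> None.
      move=> d Dd; case: d Dd => a [b|] //= Dd.
      have /Jle_max [ea|[k []//]] := sub _ Dd.
      by rewrite /= in ea; subst a; move: (nU _ Dd).
    have col : forall d, D d -> d.1 = d0.1 /\ (lv d <= maxn s1 n)%N.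
      move=> d Dd; have [z [Dz [dz d0z]]] := dir _ _ Dd Dd0.
      case: z Dz dz d0z => z1 [zl|] Dz dz d0z; last by have := nm _ Dz.
      have [e1 _] := Jle_below_nonmax dz; have [e2 _] := Jle_below_nonmax d0z.
      split; first by rewrite e1 e2.
      case: d Dd dz {e1} => a [b|] Dd dz; last by have := nm _ Dd.
      rewrite /lv /=.
      have /Jle_max [ea|[k [[<-] h]]] := sub _ Dd; last first.
        by rewrite (leq_trans h) // leq_maxl.
      rewrite /= in ea; subst a; rewrite leqNgt; apply/negP => hb.
      apply: (nU _ Dd); apply: up Un _; left; split => //=.
      by rewrite ltnW // (leq_trans _ hb) // ltnS leq_maxr.
    have : Jle (s1, None) (d0.1, Some (maxn s1 n)).
      apply: lub => d Dd; have [e h] := col _ Dd; left; split => //.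
      by case: d Dd e h {col} => a [b|] Dd; [|have := nm _ Dd].
    by rewrite /Jle /= => -[[_ []]|[]].
Qed.

Lemma open_hi k : scott_open (hi k).
Proof.
apply/open_char; split.
- move=> [x1 x2] [y1 y2]; rewrite /hi /= => hx.
  rewrite /Jle /=; move=> [[_ h]|[e _]]; last by rewrite e.
  case: x2 hx h => [x2|//]; case: y2 => [y2|//] /=.
  - exact: leq_trans.
  - by move=> _ [].
- by move=> c _; exists k => /=; rewrite /hi /=.
Qed.

Lemma open_setU U V : scott_open U -> scott_open V -> scott_open (U `|` V).
Proof.
move=> /open_char [uU mU] /open_char [uV mV]; apply/open_char; split.
- by move=> x y [Ux|Vx] xy; [left; apply: uU Ux xy|right; apply: uV Vx xy].
- move=> c [/mU [n h]|/mV [n h]]; exists n; by [left|right].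
Qed.

Lemma open_setI U V : scott_open U -> scott_open V -> scott_open (U `&` V).
Proof.
move=> /open_char [uU mU] /open_char [uV mV]; apply/open_char; split.
- by move=> x y [Ux Vx] xy; split; [apply: uU Ux xy|apply: uV Vx xy].
- move=> c [/mU [n h] /mV [n' h']]; exists (maxn n n'); split.
  + by apply: uU h _; left; split => //=; rewrite leq_maxl.
  + by apply: uV h' _; left; split => //=; rewrite leq_maxr.
Qed.

Lemma open_set0 : scott_open set0.
Proof. by apply/open_char; split. Qed.

Lemma open_setT : scott_open setT.
Proof. by apply/open_char; split => // c _; exists 0%N. Qed.

Lemma open_bigcup (F : set (set J)) : (forall U, F U -> scott_open U) ->
  scott_open (\bigcup_(U in F) U).
Proof.
move=> FO; apply/open_char; split.
- move=> x y [U FU Ux] xy; exists U => //.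
  by have /open_char [uU _] := FO _ FU; apply: uU Ux xy.
- move=> c [U FU Uc]; have /open_char [_ mU] := FO _ FU.
  by have [n h] := mU _ Uc; exists n, U.
Qed.

Lemma sandwich U X : scott_open U -> upper_set X -> U `<=` X ->
  (forall c, X (c, None) -> U (c, None)) -> scott_open X.
Proof.
move=> /open_char [_ mU] uX UX XU; apply/open_char; split => // c /XU /mU [n h].
by exists n; apply: UX.
Qed.

Lemma Va_eq j n : Va (j, Some n) = hi n.+1.
Proof. by rewrite /Va /= upL. Qed.

Lemma Ua_eq j n : Ua (j, Some n) = [set (j, Some n)] `|` hi n.+1.
Proof. by rewrite /Ua /= upL. Qed.

Lemma open_Va a : Nset a -> scott_open (Va a).
Proof. by case: a => j [n|] // _; rewrite Va_eq; apply: open_hi. Qed.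

Lemma open_Ua a : Nset a -> scott_open (Ua a).
Proof.
case: a => j [n|] // _; rewrite Ua_eq; apply: (@sandwich (hi n.+1)).
- exact: open_hi.
- move=> x y [->|hx] xy; last by right; have /open_char [u _] := open_hi n.+1; apply: u hx xy.
  case: y xy => y1 [l|] /=; last by right.
  rewrite /Jle /= => -[[<- h]|[]//].
  have := h; rewrite leq_eqVlt => /orP [/eqP <-|hl]; first by left.
  by right.
- by move=> x hx; right.
- by move=> c [|//]; case.
Qed.

Lemma fin_ind (P : set J -> Prop) :
  (forall S, finite_set S -> (forall a, S a -> P (S `\ a)) -> P S) ->
  forall S, finite_set S -> P S.
Proof.
move=> H S /finite_seqP [s ->].
have : (size s < (size s).+1)%N by [].
elim: (size s).+1 {-2}s => // n IH t ht.
apply: H; first exact: finite_seq.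
move=> a ta.
have -> : [set` t] `\ a = [set` seq.filter (predC1 a) t].
  apply/seteqP; split => x /=.
  - by move=> [xt /eqP xa]; rewrite mem_filter /= xa.
  - by rewrite mem_filter /= => /andP [/eqP xa xt]; split => //; apply/eqP.
apply: IH; rewrite size_filter.
have : (0 < count (pred1 a) t)%N by rewrite -has_count has_pred1.
have := count_predC (pred1 a) t.
move: ht; rewrite ltnS => ht e hc.
by rewrite (leq_trans _ ht) // -e -addn1 addnC leq_add2r.
Qed.

Lemma exists_min (S : set J) : S !=set0 ->
  exists a, S a /\ forall x, S x -> (lv a <= lv x)%N.
Proof.
move=> [x0 Sx0]; apply: contrapT => nm.
suff : forall k x, S x -> (k <= lv x)%N.
  by move=> /(_ (lv x0).+1 x0 Sx0); rewrite ltnn.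
elim=> // k IH x Sx; rewrite ltn_neqAle IH // andbT.
apply/negP => /eqP e; apply: nm; exists x; split => // y Sy.
by rewrite -e IH.
Qed.

Section Main.
Variable R : realType.
Variable nu : set J -> \bar R.
Local Open Scope ereal_scope.
Hypothesis nu0 : nu set0 = 0.
Hypothesis nuge0 : forall U, scott_open U -> 0 <= nu U.
Hypothesis numono : forall U V, scott_open U -> scott_open V -> U `<=` V -> nu U <= nu V.
Hypothesis numod : forall U V, scott_open U -> scott_open V ->
         nu U + nu V = nu (U `|` V) + nu (U `&` V).
Hypothesis nufin : nu setT < +oo.

Lemma nu_fin U : scott_open U -> nu U \is a fin_num.
Proof.
move=> oU; rewrite ge0_fin_numE ?nuge0 //.
by apply: le_lt_trans nufin; apply: numono => //; apply: open_setT.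
Qed.

Lemma finE (x : \bar R) : x \is a fin_num -> exists r : R, x = r%:E.
Proof. by case: x => // r _; exists r. Qed.

Definition m (a : J) : \bar R := nu (Ua a) - nu (Va a).

Lemma Va_Ua a : Va a `<=` Ua a.
Proof. by case: a => j [n|] //; rewrite Va_eq Ua_eq => x hx; right. Qed.

Lemma m_ge0 a : Nset a -> 0 <= m a.
Proof.
move=> Na; rewrite /m sube_ge0; last by rewrite nu_fin //; apply: open_Va.
by apply: numono; [apply: open_Va|apply: open_Ua|apply: Va_Ua].
Qed.

Lemma m_fin a : Nset a -> m a \is a fin_num.
Proof.
move=> Na; rewrite /m fin_numB; apply/andP; split; apply: nu_fin;
  [exact: open_Ua|exact: open_Va].
Qed.

Lemma nu_pt_in W a : scott_open W -> Nset a -> W a -> nu_pt nu a W = m a.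
Proof.
move=> oW Na Wa; rewrite /nu_pt /m.
have e := numod (open_setI oW (open_Ua Na)) (open_Va Na).
have e1 : (W `&` Ua a) `|` Va a = Ua a.
  case: a Na Wa {e} => j [n|] // _ Wa; rewrite Ua_eq Va_eq.
  apply/seteqP; split => x.
  - by move=> [[_ [->|h]]|h]; [left|right|right].
  - by move=> [->|h]; [left; split => //; left|right].
have e2 : (W `&` Ua a) `&` Va a = W `&` Va a.
  by apply/seteqP; split => x; [move=> [[? _] ?]|move=> [? h]; split => //; split => //; apply: Va_Ua].
rewrite e1 e2 in e.
have [a1 h1] := finE (nu_fin (open_setI oW (open_Ua Na))).
have [a2 h2] := finE (nu_fin (open_Va Na)).
have [a3 h3] := finE (nu_fin (open_Ua Na)).
have [a4 h4] := finE (nu_fin (open_setI oW (open_Va Na))).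
rewrite h1 h2 h3 h4 in e *; move: e; rewrite -!EFinD -?EFinB => -[e].
by congr EFin; apply/eqP; rewrite subr_eq addrAC -e addrK.
Qed.

Lemma nu_pt_out W a : scott_open W -> Nset a -> ~ W a -> nu_pt nu a W = 0.
Proof.
move=> oW Na Wa; rewrite /nu_pt.
have -> : W `&` Ua a = W `&` Va a.
  case: a Na Wa => j [n|] // _ Wa; rewrite Ua_eq Va_eq.
  apply/seteqP; split => x [Wx h]; split => //.
  by case: h => // e; rewrite e in Wx.
  by right.
by rewrite subee // nu_fin //; apply: open_setI => //; apply: open_Va.
Qed.

Lemma nu_add1 A a : scott_open A -> Nset a -> ~ A a ->
  scott_open (A `|` [set a]) -> nu (A `|` [set a]) = nu A + m a.
Proof.
move=> oA Na nAa oAa.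
have Wa : (A `|` [set a]) a by right.
rewrite -(nu_pt_in oAa Na Wa) /nu_pt.
have e1 : (A `|` [set a]) `&` Va a = A `&` Va a.
  case: a Na nAa oAa Wa => j [n|] // _ nAa _ _; rewrite Va_eq.
  apply/seteqP; split => x [h1 h2]; split => //; last by left.
  by case: h1 => // e; move: h2; rewrite e /hi /= ltnn.
have oB := open_setI oAa (open_Ua Na).
have e := numod oA oB.
have e2 : A `|` ((A `|` [set a]) `&` Ua a) = A `|` [set a].
  apply/seteqP; split => x.
  - by move=> [h|[h _]]; [left|].
  - move=> [h|h]; [by left|right; split; [by right|]].
    by case: a Na nAa oAa Wa oB e e1 h => j [n|] // *; rewrite Ua_eq; left.
have e3 : A `&` ((A `|` [set a]) `&` Ua a) = A `&` Va a.
  case: a Na nAa oAa Wa oB e e1 e2 => j [n|] // _ nAa _ _ _ _ _ _; rewrite Ua_eq Va_eq.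
  apply/seteqP; split => x.
  - move=> [Ax [_ [h|h]]]; last by split.
    by rewrite h in Ax.
  - by move=> [Ax h]; split => //; split; [left|right].
rewrite e2 e3 e1 in e *.
have [a1 h1] := finE (nu_fin oA).
have [a2 h2] := finE (nu_fin oB).
have [a3 h3] := finE (nu_fin oAa).
have [a4 h4] := finE (nu_fin (open_setI oA (open_Va Na))).
rewrite h1 h2 h3 h4 in e *; move: e; rewrite -!EFinD -?EFinB => -[e].
by congr EFin; rewrite addrA e addrK.
Qed.


Lemma open_upper U : scott_open U -> upper_set U.
Proof. by case. Qed.

Lemma below_min x j n : Jle x (j, Some n) -> (n <= lv x)%N -> x = (j, Some n).
Proof.
case: x => x1 x2 /Jle_below_nonmax [/= -> [k [/= -> kn]]].
by rewrite /lv /= => nk; have /eqP -> : k == n by rewrite eqn_leq kn nk.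
Qed.

Lemma open_addS U S : scott_open U -> S `<=` Nset -> upper_set (U `|` S) ->
  scott_open (U `|` S).
Proof.
move=> oU SN uUS; apply: (sandwich oU uUS); first by move=> x h; left.
by move=> c [//|/SN].
Qed.

Lemma nu_addS S : finite_set S -> forall U, scott_open U -> S `<=` Nset ->
  (forall x, S x -> ~ U x) -> upper_set (U `|` S) ->
  nu (U `|` S) = nu U + \sum_(x \in S) m x.
Proof.
move: S; apply: fin_ind => S finS IH U oU SN SU uUS.
case: (pselect (S !=set0)) => [S0|S0]; last first.
  have -> : S = set0 by apply/seteqP; split => // x Sx; apply: S0; exists x.
  by rewrite setU0 fsbig_set0 adde0.
have [a [Sa amin]] := exists_min S0.
have Na := SN _ Sa.
have uUS' : upper_set (U `|` (S `\ a)).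
  move=> x y hx xy.
  have hx' : (U `|` S) x by case: hx => [h|[h _]]; [left|right].
  case: (uUS x y hx' xy) => [Uy|Sy]; first by left.
  case: (pselect (y = a)) => [ya|ya]; last by right.
  subst y; exfalso; case: hx => [Ux|[Sx xa]].
    by apply: (SU _ Sa); apply: open_upper oU _ _ Ux xy.
  case: a Sa amin Na xy {hx' Sy uUS} xa => j [n|] // Sa amin _ xy xa.
  by apply: xa; apply: below_min xy _; apply: (amin _ Sx).
have oUS' : scott_open (U `|` (S `\ a)).
  by apply: (open_addS oU _ uUS') => x [/SN].
have e := IH a Sa U oU (fun x h => SN _ h.1) (fun x h => SU _ h.1) uUS'.
have -> : U `|` S = (U `|` (S `\ a)) `|` [set a].
  apply/seteqP; split => x.
  - move=> [Ux|Sx]; first by left; left.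
    by case: (pselect (x = a)) => [->|xa]; [right|left; right].
  - by move=> [[Ux|[Sx _]]|->]; [left|right|right].
rewrite nu_add1 //.
- rewrite e (fsbigD1 a S) //= -addeA; congr (_ + _); exact: addeC.
- by move=> [h|[_ h]]; [apply: (SU _ Sa)|apply: h].
- apply: (open_addS oUS') => //; first by move=> x ->.
  move=> x y hx xy.
  have hx' : (U `|` S) x by case: hx => [[h|[h _]]|->]; [left|right|right].
  case: (uUS x y hx' xy) => [Uy|Sy]; first by left; left.
  by case: (pselect (y = a)) => [->|ya]; [right|left; right].
Qed.


Definition colle (j n : nat) : set J :=
  [set x | x.1 = j /\ exists k, x.2 = Some k /\ (k <= n)%N].

Lemma open_Dcol V j n : scott_open V -> scott_open (V `\` colle j n).
Proof.
move=> /open_char [uV mV]; apply/open_char; split.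
- move=> x y [Vx Cx] xy; split; first exact: uV Vx xy.
  case: y xy => y1 y2 xy [/= e [k [/= e2 kn]]]; subst y1 y2.
  have [e1 [k' [e2 k'k]]] := Jle_below_nonmax xy.
  by apply: Cx; split => //; exists k'; split => //; apply: leq_trans k'k kn.
- move=> c [/mV [n0 h] _]; exists (maxn n0 n.+1); split.
  + by apply: uV h _; left; split => //=; rewrite leq_maxl.
  + move=> [_ [k [/= [<-] h']]]; move: h'; rewrite leqNgt => /negP; apply.
    by rewrite leq_maxr.
Qed.

Lemma nu_K S : finite_set S -> forall U V, scott_open U -> scott_open V ->
  U `<=` V -> S `<=` Nset -> S `<=` V -> (forall x, S x -> ~ U x) ->
  nu U + \sum_(x \in S) m x <= nu V.
Proof.
move: S; apply: fin_ind => S finS IH U V oU oV UV SN SV SU.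
case: (pselect (S !=set0)) => [S0|S0]; last first.
  have -> : S = set0 by apply/seteqP; split => // x Sx; apply: S0; exists x.
  by rewrite fsbig_set0 adde0; apply: numono.
have [a [Sa amin]] := exists_min S0.
have Na := SN _ Sa.
case: a Sa amin Na => j [n|] // Sa amin Na.
set a := (j, Some n).
set V' := V `\` colle j n.
have oV' : scott_open V' by apply: open_Dcol.
have Ca : colle j n a by split => //; exists n.
have aV' : ~ V' a by case.
have oV'a : scott_open (V' `|` [set a]).
  apply: (sandwich oV'); first last.
  - by move=> c [[]//|].
  - by move=> x h; left.
  move=> x y [[Vx Cx]|->] xy.
    by left; have /open_char [u _] := oV'; apply: u _ _ _ xy; split.
  have Vy : V y by apply: open_upper oV _ _ (SV _ Sa) xy.
  case: (pselect (colle j n y)) => [Cy|Cy]; last by left.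
  right; case: y Vy xy Cy => y1 y2 Vy xy [/= e [k [/= e2 kn]]]; subst y1 y2.
  move: xy; rewrite /Jle /= => -[[_ nk]|[]//].
  by have /eqP -> : k == n by rewrite eqn_leq kn nk.
have e := nu_add1 oV' Na aV' oV'a.
have UV' : U `<=` V'.
  move=> x Ux; split; first exact: UV.
  move=> [e1 [k [e2 kn]]]; apply: (SU _ Sa); have := open_upper oU Ux; apply.
  by clear Ux; case: x e1 e2 => x1 x2 /= -> ->; left; split.
have SV' : S `\ a `<=` V'.
  move=> x [Sx xa]; split; first exact: SV.
  move=> [e1 [k [e2 kn]]]; apply: xa; apply: (@below_min x j n).
    by case: x Sx e1 e2 => x1 x2 Sx /= -> ->; left; split.
  exact: amin.
have := IH a Sa U V' oU oV' UV' (fun x h => SN _ h.1) SV' (fun x h => SU _ h.1).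
move=> h; rewrite (fsbigD1 a S) //=.
apply: (le_trans _ (numono oV'a oV _)); last first.
  by move=> x [[]//|->]; apply: SV.
rewrite e addeCA addeC; apply: leeD => //.
Qed.


Definition Sig (U : set J) : \bar R := (\esum_(i in Nset `&` U) m i)%R.

Lemma Sig_ge0 U : 0 <= Sig U.
Proof. by apply: esum_ge0 => x [Nx _]; apply: m_ge0. Qed.

Lemma nu_star_eq U : scott_open U -> nu_star nu U = nu U - Sig U.
Proof.
move=> oU; rewrite /nu_star /Sig esum_mkcondr; congr (_ - _).
apply: eq_esum => a Na; case: (pselect (U a)) => h.
- by rewrite mem_set // nu_pt_in.
- rewrite nu_pt_out // ifF //; apply/negP => /set_mem; exact: h.
Qed.

Lemma esum_K U V : scott_open U -> scott_open V -> U `<=` V ->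
  nu U + (\esum_(i in Nset `&` V `&` ~` U) m i)%R <= nu V.
Proof.
move=> oU oV UV; rewrite addeC -leeBrDr ?nu_fin //.
apply: ge_ereal_sup => _ [X [finX XS] <-].
rewrite leeBrDr ?nu_fin // addeC; apply: nu_K => //.
- by move=> x /XS [[]].
- by move=> x /XS [[]].
- by move=> x /XS [_].
Qed.

Lemma Sig_split U V : U `<=` V ->
  Sig V = Sig U + (\esum_(i in Nset `&` V `&` ~` U) m i)%R.
Proof.
move=> UV; rewrite /Sig (esumID U); last by move=> x [Nx _]; apply: m_ge0.
congr (_ + _); congr esum; apply/seteqP; split => x.
- by move=> [[]].
- by move=> [Nx Ux]; split => //; split => //; apply: UV.
Qed.

Lemma fin_of_sum (x y t : \bar R) : x \is a fin_num -> y \is a fin_num ->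
  x = y + t -> t \is a fin_num.
Proof. by case: x => // x _; case: y => // y _; case: t. Qed.

Lemma Sig_fin U : scott_open U -> Sig U \is a fin_num.
Proof.
move=> oU; have := esum_K open_set0 oU (sub0set U).
rewrite setC0 setIT nu0 add0e -/(Sig U) => h.
rewrite ge0_fin_numE ?Sig_ge0 //; apply: le_lt_trans h _.
by have [r ->] := finE (nu_fin oU); apply: ltey.
Qed.

Lemma T_fin U V : scott_open U -> scott_open V -> U `<=` V ->
  (\esum_(i in Nset `&` V `&` ~` U) m i)%R \is a fin_num.
Proof.
move=> oU oV UV; apply: (fin_of_sum (Sig_fin oV) (Sig_fin oU)).
exact: Sig_split.
Qed.

Lemma star_mono U V : scott_open U -> scott_open V -> U `<=` V ->
  nu_star nu U <= nu_star nu V.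
Proof.
move=> oU oV UV; rewrite !nu_star_eq // (Sig_split UV).
have h := esum_K oU oV UV.
have [u hu] := finE (nu_fin oU); have [v hv] := finE (nu_fin oV).
have [s hs] := finE (Sig_fin oU); have [t ht] := finE (T_fin oU oV UV).
rewrite hu hv hs ht in h *; move: h.
rewrite -!EFinD -?EFinB !lee_fin => h; lra.
Qed.

Lemma star_ge0 U : scott_open U -> 0 <= nu_star nu U.
Proof.
move=> oU; have := star_mono open_set0 oU (sub0set U).
by rewrite nu_star_eq ?nu0 /Sig ?setI0 ?esum_set0 ?sube0//; exact: open_set0.
Qed.

Lemma star_mod U V : scott_open U -> scott_open V ->
  nu_star nu U + nu_star nu V =
  nu_star nu (U `|` V) + nu_star nu (U `&` V).
Proof.
move=> oU oV.
have oUV := open_setU oU oV; have oIUV := open_setI oU oV.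
rewrite !nu_star_eq //.
have sUl : U `<=` U `|` V by move=> x h; left.
have s1 := Sig_split sUl.
have sIr : U `&` V `<=` V by move=> x [].
have s2 := Sig_split sIr.
have eT : Nset `&` V `&` ~` (U `&` V) = Nset `&` (U `|` V) `&` ~` U.
  apply/seteqP; split => x.
  - by move=> [[Nx Vx] nUV]; split; [split => //; right|move=> Ux; apply: nUV].
  - move=> [[Nx [Ux|Vx]] nU] //; split => //; by move=> [].
rewrite eT in s2.
have e := numod oU oV.
have [t ht] := finE (T_fin oU oUV sUl).
have [a1 h1] := finE (nu_fin oU); have [a2 h2] := finE (nu_fin oV).
have [a3 h3] := finE (nu_fin oUV); have [a4 h4] := finE (nu_fin oIUV).
have [b1 g1] := finE (Sig_fin oU); have [b2 g2] := finE (Sig_fin oV).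
have [b3 g3] := finE (Sig_fin oUV); have [b4 g4] := finE (Sig_fin oIUV).
rewrite ht g1 g2 g3 g4 in s1 s2; rewrite h1 h2 h3 h4 in e.
rewrite h1 h2 h3 h4 g1 g2 g3 g4.
move: s1 s2 e; rewrite -!EFinD -?EFinB => -[s1] [s2] [e].
congr EFin; lra.
Qed.

Lemma star_valuation : valuation (nu_star nu).
Proof.
split.
- by rewrite nu_star_eq ?nu0 /Sig ?setI0 ?esum_set0 ?sube0//; exact: open_set0.
- exact: star_ge0.
- exact: star_mono.
- exact: star_mod.
Qed.


Hypothesis nucont : forall F : set (set J), (forall U, F U -> scott_open U) ->
  directed_family F -> nu (\bigcup_(U in F) U) = ereal_sup (nu @` F).

Lemma nu_E U V : scott_open U -> scott_open V -> U `<=` V ->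
  (forall c, V (c, None) -> U (c, None)) ->
  nu V <= nu U + (\esum_(i in Nset `&` V `&` ~` U) m i)%R.
Proof.
move=> oU oV UV VU.
pose G := [set X | exists S, [/\ finite_set S, S `<=` Nset `&` V `&` ~` U,
  upper_set (U `|` S) & X = U `|` S]].
have hG : forall X, G X -> scott_open X.
  move=> X [S [_ SD uUS ->]]; apply: open_addS => //.
  by move=> x /SD [[]].
have dG : directed_family G.
  split.
    exists U, set0; split => //; rewrite ?setU0 //; exact: open_upper.
  move=> _ _ [S1 [f1 D1 u1 ->]] [S2 [f2 D2 u2 ->]].
  exists (U `|` (S1 `|` S2)); split.
    exists (S1 `|` S2); split => //.
    - by rewrite finite_setU.
    - by move=> x [/D1|/D2].
    - move=> x y [Ux|[S1x|S2x]] xy.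
      + by case: (u1 x y (or_introl Ux) xy) => h; [left|right; left].
      + by case: (u1 x y (or_intror S1x) xy) => h; [left|right; left].
      + by case: (u2 x y (or_intror S2x) xy) => h; [left|right; right].
  by split => x [h|h]; [left|right; left|left|right; right].
have hV : V = \bigcup_(X in G) X.
  apply/seteqP; split => x; last first.
    by move=> [_ [S [_ SD _ ->]]] [/UV|/SD [[]]].
  move=> Vx; case: (pselect (U x)) => Ux.
    by exists U => //; exists set0; split => //; rewrite ?setU0 //; exact: open_upper.
  case: x Vx Ux => j [n|] Vx Ux; last by exfalso; apply: Ux; apply: VU.
  have Vj : V (j, None) by apply: (open_upper oV Vx); left; split.
  have /open_char [_ mU] := oU.
  have [m0 Um0] := mU _ (VU _ Vj).
  pose Sx := [set y : J | y.1 = j /\ (exists k, y.2 = Some k /\ (n <= k)%N) /\ ~ U y].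
  have SxD : Sx `<=` Nset `&` V `&` ~` U.
    move=> [y1 y2] [/= -> [[k [/= -> nk]] nU]]; split => //; split => //.
    by apply: (open_upper oV Vx); left; split.
  exists (U `|` Sx); last by right; split => //; split => //; exists n.
  exists Sx; split => //.
  - apply: (@sub_finite_set _ _ ((fun k => (j, Some k)) @` `I_m0)); last first.
      exact: finite_image.
    move=> [y1 y2] [/= -> [[k [/= -> nk]] nU]]; exists k => //=.
    rewrite ltnNge; apply/negP => mk; apply: nU.
    by apply: (open_upper oU Um0); left; split.
  - move=> y z [Uy|Sy] yz; first by left; apply: (open_upper oU Uy).
    case: (pselect (U z)) => Uz; first by left.
    right; have Vz : V z by apply: (open_upper oV) yz; apply: (SxD _ Sy).1.2.
    case: z Vz Uz yz => z1 [l|] Vz Uz yz; last by exfalso; apply: Uz; apply: VU.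
    have [e1 [k' [e2 kl]]] := Jle_below_nonmax yz.
    case: Sy => ey [[k [ek nk]] _]; rewrite ek in e2; case: e2 => e2; subst k'.
    split; first by rewrite /= -e1 ey.
    by split => //; exists l; split => //; apply: leq_trans nk kl.
have -> : nu V = nu (\bigcup_(X in G) X) by rewrite -hV.
rewrite nucont //; apply: ge_ereal_sup => _ [_ [S [finS SD uUS ->]] <-].
rewrite nu_addS //.
- apply: leeD2l; apply: esum_ge; exists S => //.
- by move=> x /SD [[]].
- by move=> x /SD [_].
Qed.


Lemma find_U0 (F : set (set J)) : (forall U, F U -> scott_open U) ->
  directed_family F -> exists U0, F U0 /\
  forall c, (\bigcup_(U in F) U) (c, None) -> U0 (c, None).
Proof.
move=> hF [[U1 FU1] dir].
case: (pselect (exists x, (\bigcup_(U in F) U) x)); last first.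
  by move=> nx; exists U1; split => // c h; exfalso; apply: nx; exists (c, None).
move=> [x [U2 FU2 U2x]].
have U2c : U2 (x.1, None).
  by apply: (open_upper (hF _ FU2) U2x); left; split => //; case: x.2.
have /open_char [_ mU2] := hF _ FU2.
have [n0 Un0] := mU2 _ U2c.
have big : forall c, (n0 <= c)%N -> U2 (c, None).
  by move=> c nc; apply: (open_upper (hF _ FU2) Un0); right.
have : forall k, exists U, [/\ F U, U2 `<=` U &
    forall c, (c < k)%N -> (\bigcup_(U in F) U) (c, None) -> U (c, None)].
  elim=> [|k [U [FU sU h]]]; first by exists U2; split.
  case: (pselect ((\bigcup_(U in F) U) (k, None))) => [[U' FU' U'k]|nk].
    have [U'' [FU'' [sUU sU']]] := dir _ _ FU FU'.
    exists U''; split => //; first by move=> y /sU /sUU.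
    move=> c; rewrite ltnS leq_eqVlt => /orP [/eqP ->|ck] hc; first exact: sU'.
    by apply: sUU; apply: h.
  exists U; split => // c; rewrite ltnS leq_eqVlt => /orP [/eqP ->|ck] hc //.
  by apply: h.
move=> /(_ n0) [U [FU sU h]]; exists U; split => // c hc.
case: (ltnP c n0) => cn; first exact: h.
by apply: sU; apply: big.
Qed.

Lemma star_cont : forall F : set (set J), (forall U, F U -> scott_open U) ->
  directed_family F ->
  nu_star nu (\bigcup_(U in F) U) = ereal_sup (nu_star nu @` F).
Proof.
move=> F hF dF.
have oW := open_bigcup hF.
apply/eqP; rewrite eq_le; apply/andP; split; last first.
  apply: ge_ereal_sup => _ [U FU <-]; apply: star_mono => //; first exact: hF.
  by move=> x Ux; exists U.
have [U0 [FU0 hU0]] := find_U0 hF dF.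
have oU0 := hF _ FU0.
have sub : U0 `<=` \bigcup_(U in F) U by move=> x h; exists U0.
apply: (@le_trans _ _ (nu_star nu U0)); last by apply: ereal_sup_ubound; exists U0.
rewrite !nu_star_eq // (Sig_split sub).
have h := nu_E oU0 oW sub hU0.
have [u hu] := finE (nu_fin oU0); have [w hw] := finE (nu_fin oW).
have [s hs] := finE (Sig_fin oU0); have [t ht] := finE (T_fin oU0 oW sub).
rewrite hu hw hs ht in h *; move: h.
rewrite -!EFinD -?EFinB !lee_fin => h; lra.
Qed.

End Main.

Theorem proposition3p7 (R : realType) (nu : set J -> \bar R) :
  bounded_valuation nu -> continuous_valuation nu ->
  bounded_valuation (nu_star nu) /\ continuous_valuation (nu_star nu).
Proof.
move=> [[nu0 nuge0 numono numod] nufin] [_ nucont].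
have V := star_valuation nu0 nuge0 numono numod nufin.
split; split => //.
- apply: (le_lt_trans _ nufin).
  rewrite nu_star_eq //; last exact: open_setT.
  rewrite leeBlDr; last exact: Sig_fin nu0 nuge0 numono numod nufin _ open_setT.
  by rewrite leeDl // Sig_ge0.
- exact: star_cont nu0 nuge0 numono numod nufin nucont.
Qed.
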